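(* Let $X$ be a $\delta$-hyperbolic proper geodesic metric space, $\xi\in\partial X$, $p\in X$ and $0<\epsilon\le\min\{\epsilon_0,\epsilon_1\}$. Then: (1) the identity map $(\partial X\setminus\{\xi\},d_{\xi,p,\epsilon})\to(\partial X\setminus\{\xi\},(d_{p,\epsilon})_\xi)$ is $L$-bilipschitz, where $L$ depends only on $\delta$; (2) if $\xi$ is not an isolated point of $\partial X$ and $\eta\in\partial X\setminus\{\xi\}$, then the bijection $f:(\partial X,d_{p,\epsilon})\to(S_\eta(\partial X\setminus\{\xi\}),\widehat{(d_{\xi,p,\epsilon})}_\eta)$ which is the identity on $\partial X\setminus\{\xi\}$ and sends $\xi$ to $\infty$ is bilipschitz.
   Context: $X$ is a proper geodesic Gromov $\delta$-hyperbolic space with Gromov boundary $\partial X$. Gromov product of $\xi,\eta\in\partial X$ at $p$: $(\xi|\eta)_p=\frac12\sup\liminf_{i,j}(d(p,x_i)+d(p,y_j)-d(x_i,y_j))$ over sequences $x_i\to\xi$, $y_j\to\eta$. There is $\epsilon_1>0$ depending only on $\delta$ such that for $0<\epsilon\le\epsilon_1$ there exists a metric $d_{p,\epsilon}$ on $\partial X$ (a visual metric; any such metric is meant) with $\frac12e^{-\epsilon(\eta_1|\eta_2)_p}\le d_{p,\epsilon}(\eta_1,\eta_2)\le e^{-\epsilon(\eta_1|\eta_2)_p}$. Busemann function: for a ray $\gamma$ from $p$ to $\xi$, $B_\gamma(x)=\lim_{t\to\infty}(d(\gamma(t),x)-t)$, and $B_{\xi,p}=\sup_\gamma B_\gamma$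 over rays from $p$ to $\xi$. For distinct $\eta_1,\eta_2\in\partial X\setminus\{\xi\}$, $H_{\xi,p}(\eta_1,\eta_2)=\inf_\sigma\inf_{x\in\sigma}B_{\xi,p}(x)$ over complete geodesics $\sigma$ from $\eta_1$ to $\eta_2$, and $D_{\xi,p,\epsilon}(\eta_1,\eta_2)=e^{-\epsilon H_{\xi,p}(\eta_1,\eta_2)}$. There is $\epsilon_0>0$ depending only on $\delta$ such that for $0<\epsilon\le\epsilon_0$ there is a metric $d_{\xi,p,\epsilon}$ on $\partial X\setminus\{\xi\}$ with $\frac12D_{\xi,p,\epsilon}\le d_{\xi,p,\epsilon}\le D_{\xi,p,\epsilon}$ (a parabolic visual metric; any such metric is meant). Metric inversion: for a metric space $(Z,d)$ and $q\in Z$, $d_q$ denotes a metric on $Z\setminus\{q\}$ with $\frac{d(x,y)}{4d(x,q)d(y,q)}\le d_q(x,y)\le\frac{d(x,y)}{d(x,q)d(y,q)}$ (such a metric exists). Sphericalization: for an unbounded metric space $(Z,d)$ and $q\in Z$, $S_q(Z)=Z\cup\{\infty\}$ and $\widehat d_q$ is a metric on $S_q(Z)$ with $\frac14s_q\le\widehat d_q\le s_q$, where $s_q(x,y)=\frac{d(x,y)}{(1+d(x,q))(1+d(y,q))}$ for $x,y\in Z$, $s_q(x,\infty)=\frac1{1+d(x,q)}$, $s_q(\infty,\infty)=0$ (such a metric exists). *)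

(* Defs.v *)
From HB Require Import structures.
From mathcomp Require Import all_boot all_order all_algebra.
From mathcomp Require Import all_classical all_reals.
From mathcomp Require Import ereal topology normedtype sequences exp.

Set Implicit Arguments.
Unset Strict Implicit.
Unset Printing Implicit Defensive.
Import Order.TTheory GRing.Theory Num.Theory.
Import numFieldNormedType.Exports.
Local Open Scope classical_set_scope.
Local Open Scope ring_scope.

Section Hyperbolic.
Variable R : realType.

Definition is_metric (T : Type) (d : T -> T -> R) : Prop :=
  (forall x y, 0 <= d x y) /\
  (forall x y, d x y = 0 <-> x = y) /\
  (forall x y, d x y = d y x) /\
  (forall x y z, d x z <= d x y + d y z).

Variable X : Type.
Variable d : X -> X -> R.

(* proper: closed balls are compact; for metric spaces compactness of a
   closed ball is written out as sequential compactness *)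
Definition proper_space : Prop :=
  forall (x0 : X) (r : R) (u : nat -> X),
    (forall n, d x0 (u n) <= r) ->
    exists (phi : nat -> nat) (l : X),
      (forall n, (phi n < phi n.+1)%N) /\
      (forall e : R, 0 < e -> exists N : nat, forall n, (N <= n)%N ->
          d (u (phi n)) l < e).

Definition geodesic_space : Prop :=
  forall x y : X, exists g : R -> X,
    g 0 = x /\ g (d x y) = y /\
    (forall s t, 0 <= s <= d x y -> 0 <= t <= d x y ->
       d (g s) (g t) = `|s - t|).

Definition gprod (w x y : X) : R := (d w x + d w y - d x y) / 2.

Definition hyperbolic (delta : R) : Prop :=
  forall w x y z : X, Num.min (gprod w x y) (gprod w y z) - delta <= gprod w x z.

Definition proper_geodesic_hyperbolic (delta : R) : Prop :=
  is_metric d /\ proper_space /\ geodesic_space /\ hyperbolic delta.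

Definition cvg_at_infty (u : nat -> X) : Prop :=
  forall (o : X) (M : R), exists N : nat, forall i j, (N <= i)%N -> (N <= j)%N ->
    M <= gprod o (u i) (u j).

Definition seq_equiv (u v : nat -> X) : Prop :=
  forall (o : X) (M : R), exists N : nat, forall i j, (N <= i)%N -> (N <= j)%N ->
    M <= gprod o (u i) (v j).

Definition is_bdry_class (S : set (nat -> X)) : Prop :=
  exists u, cvg_at_infty u /\ S = [set v | cvg_at_infty v /\ seq_equiv u v].

Definition bdry := {S : set (nat -> X) | is_bdry_class S}.

Definition seq_to (u : nat -> X) (xi : bdry) : Prop := proj1_sig xi u.

Definition liminf2 (a : nat -> nat -> R) : \bar R :=
  ereal_sup [set ereal_inf [set (a i j)%:E | i in [set i | (N <= i)%N] & j in [set j | (N <= j)%N]]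
            | N in [set: nat]].

Definition bgprod (p : X) (xi eta : bdry) : \bar R :=
  ((2^-1)%:E * ereal_sup
     [set liminf2 (fun i j => (d p (x i) + d p (y j) - d (x i) (y j))%R)
     | x in [set x | seq_to x xi] & y in [set y | seq_to y eta]])%E.

Definition visual_metric (p : X) (eps : R) (dv : bdry -> bdry -> R) : Prop :=
  is_metric dv /\
  forall e1 e2 : bdry,
    ((2^-1)%:E * expeR (- (eps%:E * bgprod p e1 e2)) <= (dv e1 e2)%:E)%E /\
    ((dv e1 e2)%:E <= expeR (- (eps%:E * bgprod p e1 e2)))%E.

Definition geodesic_ray (p : X) (xi : bdry) (g : R -> X) : Prop :=
  g 0 = p /\
  (forall s t, 0 <= s -> 0 <= t -> d (g s) (g t) = `|s - t|) /\
  seq_to (fun n : nat => g n%:R) xi.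

Definition busemann_ray (g : R -> X) (x : X) : R :=
  lim ((fun t : R => d (g t) x - t) @ +oo).

Definition busemann (xi : bdry) (p : X) (x : X) : \bar R :=
  ereal_sup [set (busemann_ray g x)%:E | g in [set g | geodesic_ray p xi g]].

Definition bi_geodesic (e1 e2 : bdry) (s : R -> X) : Prop :=
  (forall a b, d (s a) (s b) = `|a - b|) /\
  seq_to (fun n : nat => s (- n%:R)) e1 /\
  seq_to (fun n : nat => s n%:R) e2.

Definition Hxp (xi : bdry) (p : X) (e1 e2 : bdry) : \bar R :=
  ereal_inf [set ereal_inf [set busemann xi p x | x in range s]
            | s in [set s | bi_geodesic e1 e2 s]].

Definition Dxp (xi : bdry) (p : X) (eps : R) (e1 e2 : bdry) : \bar R :=
  expeR (- (eps%:E * Hxp xi p e1 e2))%E.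

Definition compl_pt (xi : bdry) := {eta : bdry | eta <> xi}.

Definition parabolic_visual_metric (xi : bdry) (p : X) (eps : R)
    (dp : compl_pt xi -> compl_pt xi -> R) : Prop :=
  is_metric dp /\
  forall e1 e2 : compl_pt xi, e1 <> e2 ->
    ((2^-1)%:E * Dxp xi p eps (proj1_sig e1) (proj1_sig e2) <= (dp e1 e2)%:E)%E /\
    ((dp e1 e2)%:E <= Dxp xi p eps (proj1_sig e1) (proj1_sig e2))%E.

End Hyperbolic.

Section Inversion.
Variable R : realType.

Definition inversion_metric (Z : Type) (dz : Z -> Z -> R) (q : Z)
    (di : {x : Z | x <> q} -> {x : Z | x <> q} -> R) : Prop :=
  is_metric di /\
  forall x y : {x : Z | x <> q},
    dz (proj1_sig x) (proj1_sig y) / (4 * dz (proj1_sig x) q * dz (proj1_sig y) q)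
      <= di x y /\
    di x y <= dz (proj1_sig x) (proj1_sig y) / (dz (proj1_sig x) q * dz (proj1_sig y) q).

(* S_q(Z) = Z u {oo} is modelled by option Z, with None = oo *)
Definition sph_s (Z : Type) (dz : Z -> Z -> R) (q : Z) (a b : option Z) : R :=
  match a, b with
  | Some x, Some y => dz x y / ((1 + dz x q) * (1 + dz y q))
  | Some x, None => (1 + dz x q)^-1
  | None, Some y => (1 + dz y q)^-1
  | None, None => 0
  end.

Definition unbounded (Z : Type) (dz : Z -> Z -> R) : Prop :=
  forall (z : Z) (M : R), exists y, M < dz z y.

Definition sphericalization_metric (Z : Type) (dz : Z -> Z -> R) (q : Z)
    (ds : option Z -> option Z -> R) : Prop :=
  is_metric ds /\
  forall a b, sph_s dz q a b / 4 <= ds a b /\ ds a b <= sph_s dz q a b.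

Definition bilipschitz (A B : Type) (dA : A -> A -> R) (dB : B -> B -> R)
    (L : R) (f : A -> B) : Prop :=
  1 <= L /\ forall a b, dA a b / L <= dB (f a) (f b) /\ dB (f a) (f b) <= L * dA a b.

End Inversion.

Definition to_sph (R : realType) (X : Type) (d : X -> X -> R) (xi : bdry d)
    (x : bdry d) : option (compl_pt xi) :=
  match pselect (x = xi) with
  | left _ => None
  | right h => Some (exist _ x h)
  end.

Definition isolated_pt (R : realType) (T : Type) (dv : T -> T -> R) (xi : T) : Prop :=
  exists r : R, 0 < r /\ forall y, dv xi y < r -> y = xi.

Arguments parabolic_visual_metric {R X d} xi p eps dp.
Arguments inversion_metric {R Z} dz q di.

(* Main.v *)
Require Import Defs.
From HB Require Import structures.
From mathcomp Require Import all_boot all_order all_algebra.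
From mathcomp Require Import all_classical all_reals.
From mathcomp Require Import ereal topology normedtype sequences exp.
From mathcomp Require Import ring lra.
Set Implicit Arguments.
Unset Strict Implicit.
Unset Printing Implicit Defensive.
Import Order.TTheory GRing.Theory Num.Theory.
Import numFieldNormedType.Exports.
Local Open Scope classical_set_scope.
Local Open Scope ring_scope.

Section Geo.
Variable R : realType.
Variable X : Type.
Variable d : X -> X -> R.
Variable delta : R.
Hypothesis Hm : is_metric d.
Hypothesis Hh : hyperbolic d delta.

Notation gp := (gprod d).

Lemma dsym x y : d x y = d y x.
Proof. by case: Hm => _ [_ [h _]]. Qed.
Lemma dnn x y : 0 <= d x y.
Proof. by case: Hm. Qed.
Lemma dtri x y z : d x z <= d x y + d y z.
Proof. by case: Hm => _ [_ [_ h]]. Qed.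
Lemma dxx x : d x x = 0.
Proof. by case: Hm => _ [h _]; apply/h. Qed.

Lemma gsym w x y : gp w x y = gp w y x.
Proof. by rewrite /gprod (dsym x y) (addrC (d w x)). Qed.

Lemma gnn w x y : 0 <= gp w x y.
Proof. rewrite /gprod; have := dtri x w y; have := dsym x w; lra. Qed.

Lemma gbase w w' x y : gp w x y <= gp w' x y + d w w'.
Proof.
rewrite /gprod; have := dtri w w' x; have := dtri w w' y; lra.
Qed.

Lemma hyp2 w x y z c : c <= gp w x y -> c <= gp w y z -> c - delta <= gp w x z.
Proof.
move=> h1 h2; have := Hh w x y z.
have : c <= Num.min (gp w x y) (gp w y z) by rewrite le_min h1 h2.
lra.
Qed.

Lemma hyp3 w x y1 y2 z c : c <= gp w x y1 -> c <= gp w y1 y2 -> c <= gp w y2 z ->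
  c - 2 * delta <= gp w x z.
Proof.
move=> h1 h2 h3; have h := hyp2 h1 h2.
have h4 : c - delta <= gp w y2 z.
  have : 0 <= delta.
    have := Hh w x x x; rewrite minxx; lra.
  lra.
have := hyp2 h h4; lra.
Qed.


Definition EQ (w : X) (u v : nat -> X) := forall M : R, exists N, forall i j,
  (N <= i)%N -> (N <= j)%N -> M <= gp w (u i) (v j).

Lemma EQsym w u v : EQ w u v -> EQ w v u.
Proof. move=> h M; have [N hN] := h M; exists N => i j hi hj; rewrite gsym; exact: hN. Qed.

Lemma same_class (al : bdry d) u v w : seq_to u al -> seq_to v al -> EQ w u v.
Proof.
case: al => S [u0 [cu0 HS]]; rewrite /seq_to /=; subst S.
move=> [_ hu] [_ hv] M.
have [N1 h1] := hu w (M + delta); have [N2 h2] := hv w (M + delta).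
exists (maxn N1 N2) => i j hi hj.
have k1 : (N1 <= maxn N1 N2)%N by rewrite leq_maxl.
have k2 : (N2 <= maxn N1 N2)%N by rewrite leq_maxr.
have a1 : M + delta <= gp w (u i) (u0 (maxn N1 N2)).
  rewrite gsym; apply: h1 => //; exact: leq_trans k1 hi.
have a2 : M + delta <= gp w (u0 (maxn N1 N2)) (v j).
  apply: h2 => //; exact: leq_trans k2 hj.
have := hyp2 a1 a2; lra.
Qed.

Lemma class_cvg (al : bdry d) u w : seq_to u al -> EQ w u u.
Proof. by move=> hs; exact: (@same_class al u u w hs hs). Qed.


Lemma bg_sup (p : X) (al be : bdry d) (r : R) :
  bgprod p al be = r%:E ->
  ereal_sup [set liminf2 (fun i j => (d p (x i) + d p (y j) - d (x i) (y j))%R)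
     | x in [set x | seq_to x al] & y in [set y | seq_to y be]] = (2 * r)%:E.
Proof.
rewrite /bgprod; set s := ereal_sup _.
case: s => [s'| |] /=.
- move=> [<-]; congr (_%:E); field=> //.
- by rewrite (mulry (2^-1 : R)) gtr0_sg ?invr_gt0 // mul1e.
- by rewrite (mulrNy (2^-1 : R)) gtr0_sg ?invr_gt0 // mul1e.
Qed.

Lemma dsum2 p (x y : X) : d p x + d p y - d x y = 2 * gp p x y.
Proof. by rewrite /gprod; field. Qed.

Lemma stab p (al be : bdry d) r u v : bgprod p al be = r%:E ->
  seq_to u al -> seq_to v be ->
  exists N, forall i j, (N <= i)%N -> (N <= j)%N ->
    r - 2^-1 - 2 * delta <= gp p (u i) (v j) /\ gp p (u i) (v j) <= r + 2^-1 + 2 * delta.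
Proof.
move=> hbg hu hv; have hs := bg_sup hbg.
set S := ereal_sup _ in hs.
have [N1 hN1] : exists N1, forall i j, (N1 <= i)%N -> (N1 <= j)%N ->
    r - 2^-1 - 2 * delta <= gp p (u i) (v j).
  have : ((2 * r - 1)%:E < S)%E by rewrite hs lte_fin; lra.
  rewrite /S.
  case/ereal_sup_gt => _ [x hx [y hy <-]].
  rewrite /liminf2; case/ereal_sup_gt => _ [N1 _ <-] hN.
  have hb : forall k l, (N1 <= k)%N -> (N1 <= l)%N -> r - 2^-1 <= gp p (x k) (y l).
    move=> k l hk hl.
    have := @ereal_inf_lbound R [set (d p (x i) + d p (y j) - d (x i) (y j))%:E
       | i in [set i | (N1 <= i)%N] & j in [set j | (N1 <= j)%N]] _
       (ex_intro2 _ _ k hk (ex_intro2 _ _ l hl erefl)).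
    move/(lt_le_trans hN); rewrite lte_fin dsum2; lra.
  have [N2 h2] := @same_class al u x p hu hx (r - 2^-1).
  have [N3 h3] := @same_class be y v p hy hv (r - 2^-1).
  exists (maxn N2 N3) => i j hi hj.
  set k := maxn N1 (maxn N2 N3).
  have hk1 : (N1 <= k)%N by rewrite leq_maxl.
  have hk2 : (N2 <= k)%N by rewrite /k (leq_trans (leq_maxl N2 N3)) // leq_maxr.
  have hk3 : (N3 <= k)%N by rewrite /k (leq_trans (leq_maxr N2 N3)) // leq_maxr.
  have hi2 : (N2 <= i)%N by exact: leq_trans (leq_maxl _ _) hi.
  have hj3 : (N3 <= j)%N by exact: leq_trans (leq_maxr _ _) hj.
  have := hyp3 (h2 i k hi2 hk2) (hb k k hk1 hk1) (h3 k j hk3 hj3); lra.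
have [N2 h2] := @class_cvg al u p hu (r + 2 + 2 * delta).
have [N3 h3] := @class_cvg be v p hv (r + 2 + 2 * delta).
have hex : forall N, exists k l, [/\ (N <= k)%N, (N <= l)%N & gp p (u k) (v l) < r + 2^-1].
  move=> N.
  have h1 : (liminf2 (fun i j => (d p (u i) + d p (v j) - d (u i) (v j))%R) <= (2 * r)%:E)%E.
    rewrite -hs /S; apply: ereal_sup_ubound; exists u => //; exists v => //.
  have h0 : (ereal_inf [set ((d p (u i) + d p (v j) - d (u i) (v j))%R)%:E
       | i in [set i | (N <= i)%N] & j in [set j | (N <= j)%N]] < (2 * r + 1)%:E)%E.
    apply: le_lt_trans _ (_ : (2 * r)%:E < _)%E; last by rewrite lte_fin; lra.
    apply: le_trans h1; apply: ereal_sup_ubound; by exists N.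
  case/ereal_inf_lt: h0 => _ [k hk [l hl <-]]; rewrite lte_fin dsum2 => hkl.
  exists k, l; split => //; lra.
exists (maxn N1 (maxn N2 N3)) => i j hi hj; split.
  by apply: hN1; [exact: leq_trans (leq_maxl _ _) hi | exact: leq_trans (leq_maxl _ _) hj].
have hi2 : (N2 <= i)%N by apply: leq_trans hi; rewrite (leq_trans (leq_maxl N2 N3)) // leq_maxr.
have hj3 : (N3 <= j)%N by apply: leq_trans hj; rewrite (leq_trans (leq_maxr N2 N3)) // leq_maxr.
rewrite leNgt; apply/negP => hgt.
have [k [l [hk hl hkl]]] := hex (maxn N2 N3).
have hk2 : (N2 <= k)%N by exact: leq_trans (leq_maxl _ _) hk.
have hl3 : (N3 <= l)%N by exact: leq_trans (leq_maxr _ _) hl.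
have a1 : r + 2^-1 + 2 * delta <= gp p (u k) (u i).
  have := h2 k i hk2 hi2; lra.
have a3 : r + 2^-1 + 2 * delta <= gp p (v j) (v l).
  have := h3 j l hj3 hl3; lra.
have := hyp3 a1 (ltW hgt) a3; lra.
Qed.

Lemma ident p x a b c : d a b = d x a + d x b ->
  d x c - d p c = gp p a b - gp p a c - gp p b c + gp x a c + gp x b c.
Proof. move=> h; rewrite /gprod; lra. Qed.

Lemma min_small x a b c : d a b = d x a + d x b ->
  gp x a c <= delta \/ gp x b c <= delta.
Proof.
move=> h; have := Hh x a c b.
have -> : gp x a b = 0 by rewrite /gprod h dsym; lra.
rewrite (gsym x c b); case: (leP (gp x a c) (gp x b c)) => _ ?; [left|right]; lra.
Qed.

Lemma transl a b c x w : d x a - d x b - (d w a - d w b) = 2 * (gp x a c - gp x b c - (gp w a c - gp w b c)).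
Proof. rewrite /gprod; lra. Qed.
Lemma mono_lim (f : R -> R) (m : R) :
  (forall s t, 0 <= s -> s <= t -> f t <= f s) ->
  (forall t, 0 <= t -> m <= f t) ->
  f @ +oo --> inf [set f t | t in [set t | 0 <= t]].
Proof.
move=> fdec fm; set E := [set f t | t in [set t | 0 <= t]].
have hlb : has_lbound E by exists m => _ [t t0 <-]; exact: fm.
have hne : E !=set0 by exists (f 0); exists 0 => //=.
apply/cvgrPdist_le => _/posnumP[e].
have [_ [p p0 <-] fpe] := @inf_adherent R E e%:num (gt0 e) (conj hne hlb).
near=> n; have pn : p <= n by near: n; apply: nbhs_pinfty_ge; rewrite num_real.
have := ge_inf hlb (ex_intro2 _ _ n (le_trans p0 pn) erefl) .
have := fdec _ _ p0 pn.
move=> h1 h2; rewrite ler_distlC; apply/andP; split; lra.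
Unshelve. all: by end_near. Qed.

Section Ray.
Variables (p : X) (xi : bdry d) (g : R -> X) (x : X).
Hypothesis hg : geodesic_ray p xi g.

Lemma ray_d s t : 0 <= s -> 0 <= t -> d (g s) (g t) = `|s - t|.
Proof. by case: hg => _ [h _]; apply: h. Qed.


Lemma br_eq : busemann_ray d g x = inf [set d (g t) x - t | t in [set t | 0 <= t]].
Proof.
rewrite /busemann_ray; apply: cvg_lim => //.
apply: (@mono_lim _ (- d p x)).
- move=> s t s0 st.
  have := dtri (g t) (g s) x; rewrite ray_d ?(le_trans s0 st) // ger0_norm; lra.
- move=> t t0; have := dtri (g t) x (g 0).
  case: hg => h0 _; rewrite ray_d // subr0 ger0_norm // h0 (dsym x p); lra.
Qed.

Lemma br_le (n : nat) : busemann_ray d g x <= d (g n%:R) x - n%:R.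
Proof.
rewrite br_eq; apply: ge_inf; last by exists n%:R; rewrite //= ler0n.
exists (- d p x) => _ [t t0 <-]; have := dtri (g t) x (g 0).
case: hg => h0 _; rewrite ray_d // subr0 ger0_norm // h0 (dsym x p); lra.
Qed.

Lemma br_ge c N : (forall n, (N <= n)%N -> c <= d (g n%:R) x - n%:R) ->
  c <= busemann_ray d g x.
Proof.
move=> h; rewrite br_eq; apply: lb_le_inf; first by exists (d (g 0) x - 0); exists 0; rewrite //=.
move=> _ [t t0 <-].
set n := maxn N (Num.Def.archi_bound t).
have tn : t <= n%:R.
  apply: ltW; apply: (lt_le_trans (archi_boundP t0)); rewrite ler_nat leq_maxr //.
apply: (le_trans (h n (leq_maxl _ _))).
have := dtri (g n%:R) (g t) x; rewrite ray_d // ?(le_trans t0 tn) // ger0_norm ?subr_ge0 //; lra.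
Qed.
End Ray.


Lemma absl (a b : R) : a <= b -> `|a - b| = b - a.
Proof. by move=> h; rewrite distrC ger0_norm // subr_ge0. Qed.
Lemma absr (a b : R) : b <= a -> `|a - b| = a - b.
Proof. by move=> h; rewrite ger0_norm // subr_ge0. Qed.

Lemma nat_bound (s : R) : exists T : nat, forall i : nat, (T <= i)%N ->
  - i%:R <= s /\ s <= i%:R.
Proof.
exists (Num.Def.archi_bound `|s|) => i hi.
have h1 := archi_boundP (normr_ge0 s).
have h2 : ((Num.Def.archi_bound `|s|)%:R <= i%:R :> R) by rewrite ler_nat.
have := ler_norm s; have := ler_norm (- s); rewrite normrN; lra.
Qed.

Section Key.
Variables (p : X) (xi e1 e2 : bdry d) (r12 r1 r2 : R).
Hypothesis h12 : bgprod p e1 e2 = r12%:E.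
Hypothesis h1 : bgprod p e1 xi = r1%:E.
Hypothesis h2 : bgprod p e2 xi = r2%:E.
Variable g0 : R -> X.
Hypothesis hg0 : geodesic_ray p xi g0.

Let K := 16 * delta + 6.
Let A := r12 - r1 - r2.

Lemma dpg (g : R -> X) (n : nat) : geodesic_ray p xi g -> d p (g n%:R) = n%:R.
Proof.
move=> hg; have := ray_d hg (ler0n _ 0) (ler0n _ n).
by case: hg => -> _; rewrite absl ?ler0n // subr0.
Qed.

Lemma key_lower : ((A - K)%:E <= Hxp xi p e1 e2)%E.
Proof.
have dge : 0 <= delta by have := Hh p p p p; rewrite minxx; lra.
rewrite /Hxp; apply: le_ereal_inf_tmp => _ [s hs <-]; apply: le_ereal_inf_tmp => _ [_ [t _ <-] <-].
rewrite /busemann; apply: le_trans (ereal_sup_ubound _); last by exists g0.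
rewrite lee_fin.
case: hs => hd [hu hv].
have hc : seq_to (fun n : nat => g0 n%:R) xi by case: hg0 => _ [].
have [N1 hN1] := stab h12 hu hv.
have [N2 hN2] := stab h1 hu hc.
have [N3 hN3] := stab h2 hv hc.
have [T hT] := nat_bound t.
apply: (@br_ge _ _ _ _ hg0 _ (maxn N1 (maxn N2 (maxn N3 T)))) => n hn.
set m := (n + T)%N.
have hm : (n <= m)%N by rewrite leq_addr.
have hNn : forall N, (N <= maxn N1 (maxn N2 (maxn N3 T)))%N -> (N <= m)%N.
  by move=> N hN; apply: leq_trans hN (leq_trans hn hm).
have hNn' : forall N, (N <= maxn N1 (maxn N2 (maxn N3 T)))%N -> (N <= n)%N.
  by move=> N hN; apply: leq_trans hN hn.
have e1' : (N1 <= maxn N1 (maxn N2 (maxn N3 T)))%N by rewrite !leq_max leqnn ?orbT.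
have e2' : (N2 <= maxn N1 (maxn N2 (maxn N3 T)))%N by rewrite !leq_max leqnn ?orbT.
have e3' : (N3 <= maxn N1 (maxn N2 (maxn N3 T)))%N by rewrite !leq_max leqnn ?orbT.
have [_ a1] := hN2 m n (hNn _ e2') (hNn' _ e2').
have [_ a2] := hN3 m n (hNn _ e3') (hNn' _ e3').
have [a3 _] := hN1 m m (hNn _ e1') (hNn _ e1').
have [tl tr] := hT m (leq_addl n T).
have hab : d (s (- m%:R)) (s m%:R) = d (s t) (s (- m%:R)) + d (s t) (s m%:R).
  have hm0 : 0 <= m%:R :> R := ler0n _ _. rewrite !hd (@absl (- m%:R) m%:R); last lra.
  rewrite (@absr t (- m%:R)); last lra. rewrite (@absl t m%:R); last lra. lra.
have := ident p (g0 n%:R) hab.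
rewrite dpg // (dsym (g0 n%:R)).
have := gnn (s t) (s (- m%:R)) (g0 n%:R); have := gnn (s t) (s m%:R) (g0 n%:R).
rewrite /K /A; lra.
Qed.


Variable sg : R -> X.
Hypothesis hsg : bi_geodesic e1 e2 sg.

Lemma key_upper : (Hxp xi p e1 e2 <= (A + K)%:E)%E.
Proof.
have dge : 0 <= delta by have := Hh p p p p; rewrite minxx; lra.
case: (hsg) => hd [hu hv].
have hc0 : seq_to (fun n : nat => g0 n%:R) xi by case: hg0 => _ [].
set u := (fun n : nat => sg (- n%:R)) in hu.
set v := (fun n : nat => sg n%:R) in hv.
set c0 := (fun n : nat => g0 n%:R) in hc0.
set w := sg 0.
have [Nb1 hNb1] := stab h1 hu hc0.
have [Nb2 hNb2] := stab h2 hv hc0.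
set Bd := `|r1| + `|r2| + 1 + 2 * delta + d w p.
set M := Bd + 2 * delta + 1.
have hM : M = Bd + 2 * delta + 1 by [].
have hBd : Bd = `|r1| + `|r2| + 1 + 2 * delta + d w p by [].
have [Nu hNu] := @class_cvg e1 u w hu M.
have [Nv hNv] := @class_cvg e2 v w hv M.
have [Nc hNc] := @class_cvg xi c0 w hc0 (M + delta).
set k0 := maxn Nb1 (maxn Nb2 (maxn Nu (maxn Nv Nc))).
have k1 : (Nb1 <= k0)%N by rewrite /k0 !leq_max leqnn ?orbT.
have k2 : (Nb2 <= k0)%N by rewrite /k0 !leq_max leqnn ?orbT.
have k3 : (Nu <= k0)%N by rewrite /k0 !leq_max leqnn ?orbT.
have k4 : (Nv <= k0)%N by rewrite /k0 !leq_max leqnn ?orbT.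
have k5 : (Nc <= k0)%N by rewrite /k0 !leq_max leqnn ?orbT.
set P := gp w (u k0) (c0 k0).
set Q := gp w (v k0) (c0 k0).
have hP : P <= Bd.
  have [_ b] := hNb1 k0 k0 k1 k1; have := gbase w p (u k0) (c0 k0).
  have := ler_norm r1; have := normr_ge0 r2; rewrite /Bd /P; lra.
have hQ : Q <= Bd.
  have [_ b] := hNb2 k0 k0 k2 k2; have := gbase w p (v k0) (c0 k0).
  have := ler_norm r2; have := normr_ge0 r1; rewrite /Bd /Q; lra.
set x := sg (Q - P).
rewrite /Hxp; apply: le_trans (ereal_inf_lbound _) _.
  by exists sg.
apply: le_trans (ereal_inf_lbound _) _; first by exists x => //; exists (Q - P).
rewrite /busemann; apply: ge_ereal_sup => _ [g hg <-]; rewrite lee_fin.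
have hc : seq_to (fun n : nat => g n%:R) xi by case: hg => _ [].
set c := (fun n : nat => g n%:R) in hc.
have [N1 hN1] := stab h12 hu hv.
have [N2 hN2] := stab h1 hu hc.
have [N3 hN3] := stab h2 hv hc.
have [Ncc hNcc] := @same_class xi c c0 w hc hc0 (M + delta).
have [T hT] := nat_bound (Q - P).
set i := maxn k0 (maxn N1 (maxn N2 (maxn N3 (maxn Ncc T)))).
have i0 : (k0 <= i)%N by rewrite /i leq_maxl.
have i1 : (N1 <= i)%N by rewrite /i !leq_max leqnn ?orbT.
have i2 : (N2 <= i)%N by rewrite /i !leq_max leqnn ?orbT.
have i3 : (N3 <= i)%N by rewrite /i !leq_max leqnn ?orbT.
have i4 : (Ncc <= i)%N by rewrite /i !leq_max leqnn ?orbT.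
have i5 : (T <= i)%N by rewrite /i !leq_max leqnn ?orbT.
have [tl tr] := hT i i5.
have cc : M <= gp w (c0 k0) (c i).
  have b1 := hNcc i i i4 i4.
  have b2 := hNc i k0 (leq_trans k5 i0) k5.
  rewrite gsym; have := hyp2 b1 b2; lra.
have uu : M <= gp w (u k0) (u i) by apply: hNu => //; exact: leq_trans k3 i0.
have vv : M <= gp w (v k0) (v i) by apply: hNv => //; exact: leq_trans k4 i0.
set tu := gp w (u i) (c i).
set tv := gp w (v i) (c i).
have tul : P - 2 * delta <= tu.
  have a1 : P <= gp w (u i) (u k0) by rewrite gsym; lra.
  have a3 : P <= gp w (c0 k0) (c i) by lra.
  exact: hyp3 a1 (lexx P) a3.
have tvl : Q - 2 * delta <= tv.
  have a1 : Q <= gp w (v i) (v k0) by rewrite gsym; lra.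
  have a3 : Q <= gp w (c0 k0) (c i) by lra.
  exact: hyp3 a1 (lexx Q) a3.
have tuu : tu <= P + 2 * delta + 1.
  case: (leP tu (P + 2 * delta + 1)) => // hlt.
  have a1 : P + 2 * delta + 1 <= gp w (u k0) (u i) by lra.
  have a3 : P + 2 * delta + 1 <= gp w (c i) (c0 k0) by rewrite gsym; lra.
  have := hyp3 a1 (ltW hlt) a3; rewrite -/P; lra.
have tvu : tv <= Q + 2 * delta + 1.
  case: (leP tv (Q + 2 * delta + 1)) => // hlt.
  have a1 : Q + 2 * delta + 1 <= gp w (v k0) (v i) by lra.
  have a3 : Q + 2 * delta + 1 <= gp w (c i) (c0 k0) by rewrite gsym; lra.
  have := hyp3 a1 (ltW hlt) a3; rewrite -/Q; lra.
have hi0 : 0 <= i%:R :> R := ler0n _ _.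
have dxa : d x (u i) = Q - P + i%:R.
  by rewrite /x /u hd (@absr (Q - P) (- i%:R)); lra.
have dxb : d x (v i) = i%:R - (Q - P).
  by rewrite /x /v hd (@absl (Q - P) i%:R); lra.
have dwa : d w (u i) = i%:R.
  by rewrite /w /u hd (@absr 0 (- i%:R)); lra.
have dwb : d w (v i) = i%:R.
  by rewrite /w /v hd (@absl 0 i%:R); lra.
have dab : d (u i) (v i) = d x (u i) + d x (v i).
  rewrite dxa dxb /u /v hd (@absl (- i%:R) i%:R); lra.
have htr := transl (u i) (v i) (c i) x w.
rewrite dxa dxb dwa dwb -/tu -/tv in htr.
have hsm := min_small (c i) dab.
have gn1 := gnn x (u i) (c i); have gn2 := gnn x (v i) (c i).
have hsum : gp x (u i) (c i) + gp x (v i) (c i) <= 6 * delta + 2.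
  case: hsm => hs; lra.
have [_ b12] := hN1 i i i1 i1.
have [b1 _] := hN2 i i i2 i2.
have [b2 _] := hN3 i i i3 i3.
have hid := ident p (c i) dab.
apply: le_trans (br_le _ hg i) _.
rewrite (dsym (g i%:R)) -/(c i).
have := dpg i hg; rewrite -/(c i) => hpc.
rewrite hpc in hid.
rewrite /A /K; lra.
Qed.

End Key.

End Geo.

Lemma fin_bound (R : realType) (eps t : R) (y : \bar R) : 0 < eps -> t <> 0 ->
  ((2^-1)%:E * expeR (- (eps%:E * y)) <= t%:E)%E -> (t%:E <= expeR (- (eps%:E * y)))%E ->
  exists r, y = r%:E /\ 2^-1 * expR (- (eps * r)) <= t /\ t <= expR (- (eps * r)).
Proof.
move=> e0 t0; case: y => [r| |].
- by rewrite /= !lee_fin => h1 h2; exists r.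
- rewrite mulry gtr0_sg // mul1e /= mule0 !lee_fin => h1 h2; exfalso; apply: t0; lra.
- rewrite mulrNy gtr0_sg // mul1e /=.
  by rewrite mulry gtr0_sg ?invr_gt0 // mul1e leNgt ltey.
Qed.

Lemma sig_neq (T : Type) (P : T -> Prop) (a b : {x | P x}) : a <> b -> proj1_sig a <> proj1_sig b.
Proof.
case: a b => [a ha] [b hb] /= nab eab; apply: nab; subst b.
by congr exist; apply: Prop_irrelevance.
Qed.


Section Main.
Variables (R : realType) (X : Type) (d : X -> X -> R) (delta : R).
Hypothesis Hm : is_metric d.
Hypothesis Hh : hyperbolic d delta.

Lemma pair_bound (xi : bdry d) p (eps eps0 : R) dv dp di :
  0 < eps -> eps <= eps0 ->
  visual_metric p eps dv -> parabolic_visual_metric xi p eps dp ->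
  inversion_metric dv xi di ->
  forall a b, dp a b / (8 * expR (eps0 * (16 * delta + 6))) <= di a b /\
              di a b <= (8 * expR (eps0 * (16 * delta + 6))) * dp a b.
Proof.
move=> e0 ee0 [mv hv] [mp hp] [mi hi] a b.
have dge : 0 <= delta by have := Hh p p p p; rewrite minxx; lra.
set K := 16 * delta + 6.
set L := 8 * expR (eps0 * K).
have L0 : 0 < L by rewrite /L mulr_gt0 // expR_gt0.
have [eab | nab] := pselect (a = b).
  subst b; have [_ [h0 _]] := mi; have [_ [h0' _]] := mp.
  rewrite (proj2 (h0 a a) erefl) (proj2 (h0' a a) erefl) ?mul0r ?mulr0; lra.
set va := proj1_sig a; set vb := proj1_sig b.
have vab : va <> vb by apply: sig_neq.
have vax : va <> xi by exact: proj2_sig a.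
have vbx : vb <> xi by exact: proj2_sig b.
have dvpos : forall x y, x <> y -> dv x y <> 0.
  by move=> x y nxy h0; apply: nxy; have [_ [h _]] := mv; apply/h.
have [r12 [h12 [l12 u12]]] :=
  fin_bound e0 (dvpos _ _ vab) (proj1 (hv va vb)) (proj2 (hv va vb)).
have [r1 [h1 [l1 u1]]] :=
  fin_bound e0 (dvpos _ _ vax) (proj1 (hv va xi)) (proj2 (hv va xi)).
have [r2 [h2 [l2 u2]]] :=
  fin_bound e0 (dvpos _ _ vbx) (proj1 (hv vb xi)) (proj2 (hv vb xi)).
have dppos : dp a b <> 0 by move=> h0; apply: nab; have [_ [h _]] := mp; apply/h.
have [h [hH [lh uh]]] :=
  fin_bound e0 dppos (proj1 (hp a b nab)) (proj2 (hp a b nab)).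
rewrite -/va -/vb in hH.
have [[sg hsg] | nos] := pselect (exists sg, bi_geodesic va vb sg); last first.
  exfalso; move: hH; rewrite /Hxp.
  have -> : [set ereal_inf [set busemann xi p x | x in range s]
            | s in [set s | bi_geodesic va vb s]] = set0.
    by apply/seteqP; split => // z [s hs _]; apply: nos; exists s.
  by rewrite ereal_inf0.
have [[g0 hg0] | nog] := pselect (exists g, geodesic_ray p xi g); last first.
  exfalso.
  have hb : (busemann xi p (sg 0%R) = -oo)%E.
    rewrite /busemann.
    have -> : [set (busemann_ray d g (sg 0%R))%:E | g in [set g | geodesic_ray p xi g]] = set0.
      by apply/seteqP; split => // z [g hg _]; apply: nog; exists g.
    by rewrite ereal_sup0.
  have : (Hxp xi p va vb <= -oo)%E.
    rewrite /Hxp; apply: le_trans (ereal_inf_lbound _) _; first by exists sg.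
    rewrite -hb; apply: ereal_inf_lbound; by exists (sg 0%R) => //; exists 0%R.
  by rewrite hH leeNy_eq.
have kl := key_lower Hm Hh h12 h1 h2 hg0.
have ku := key_upper Hm Hh h12 h1 h2 hg0 hsg.
rewrite hH !lee_fin -/K in kl ku.
set E12 := expR (- (eps * r12)) in l12 u12.
set E1 := expR (- (eps * r1)) in l1 u1.
set E2 := expR (- (eps * r2)) in l2 u2.
set D := expR (- (eps * h)) in lh uh.
set Z := expR (- (eps * (r12 - r1 - r2))).
set eK := expR (eps * K).
set eK0 := expR (eps0 * K).
have E1p : 0 < E1 by apply: expR_gt0.
have E2p : 0 < E2 by apply: expR_gt0.
have Zp : 0 < Z by apply: expR_gt0.
have eKp : 0 < eK by apply: expR_gt0.
have hZE : Z * E1 * E2 = E12.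
  by rewrite /Z /E1 /E2 /E12 -!expRD; congr expR; lra.
have K0 : 0 <= K by rewrite /K; lra.
have hDu : D <= Z * eK.
  rewrite /D /Z /eK -expRD ler_expR.
  have : eps * (r12 - r1 - r2 - K) <= eps * h by rewrite ler_wpM2l //; lra.
  lra.
have hDl : Z <= D * eK.
  rewrite /D /Z /eK -expRD ler_expR.
  have : eps * h <= eps * (r12 - r1 - r2 + K) by rewrite ler_wpM2l //; lra.
  lra.
have hK : eK <= eK0 by rewrite /eK /eK0 ler_expR ler_wpM2r //; lra.
have [hil hiu] := hi a b; rewrite -/va -/vb in hil hiu.
set u := dv va xi in l1 u1 hil hiu.
set v := dv vb xi in l2 u2 hil hiu.
set w := dv va vb in l12 u12 hil hiu.
set t := di a b in hil hiu *.
set q := dp a b in lh uh *.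
have up : 0 < u by lra.
have vp : 0 < v by lra.
have uvp : 0 < u * v by apply: mulr_gt0.
have t0 : 0 <= t.
  by have [h0 _] := mi; apply: h0.
move: hil; rewrite -(mulrA 4) ler_pdivrMr; last by rewrite mulr_gt0.
move=> hil.
move: hiu; rewrite ler_pdivlMr // => hiu.
have E12p : 0 < E1 * E2 by apply: mulr_gt0.
have hZt : Z <= 8 * t.
  rewrite -(ler_pM2r E12p).
  have : t * (u * v) <= t * (E1 * E2).
    by apply: ler_wpM2l => //; apply: ler_pM; lra.
  move=> h3; rewrite mulrA hZE; nra.
have htZ : t <= 4 * Z.
  rewrite -(ler_pM2r E12p).
  have : E1 * E2 <= 4 * (u * v).
    have : E1 * E2 <= (2 * u) * (2 * v) by apply: ler_pM; lra.
    lra.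
  move=> h4.
  have : t * (E1 * E2) <= t * (4 * (u * v)) by apply: ler_wpM2l.
  move=> h5; have hZE2 : 4 * Z * (E1 * E2) = 4 * E12 by rewrite -hZE; ring.
  rewrite hZE2; nra.
split.
  rewrite ler_pdivrMr // /L -/eK0.
  have : Z * eK <= 8 * t * eK by apply: ler_wpM2r; lra.
  have : 8 * t * eK <= 8 * t * eK0 by apply: ler_wpM2l => //; lra.
  lra.
rewrite /L -/eK0.
have : Z <= 2 * q * eK by nra.
have : 8 * q * eK <= 8 * q * eK0.
  by apply: ler_wpM2l; lra.
lra.
Qed.


Lemma bg_nn p (al be : bdry d) : (0 <= bgprod p al be)%E.
Proof.
rewrite /bgprod; apply: mule_ge0; first by rewrite lee_fin invr_ge0.
case: al => S [u0 [cu0 HS]]; case: be => T [v0 [cv0 HT]].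
apply: le_trans (ereal_sup_ubound _); last first.
  exists u0; first by rewrite /seq_to /= HS; split.
  exists v0; first by rewrite /seq_to /= HT; split.
  reflexivity.
rewrite /liminf2; apply: le_trans (ereal_sup_ubound _); last by exists 0%N.
apply: le_ereal_inf_tmp => _ [i _ [j _ <-]].
rewrite lee_fin dsum2; have := gnn Hm p (u0 i) (v0 j); lra.
Qed.

Lemma to_sph_xi (xi : bdry d) : to_sph xi xi = None.
Proof. by rewrite /to_sph; case: pselect. Qed.

Lemma to_sph_y (xi : bdry d) (y : compl_pt xi) : to_sph xi (sval y) = Some y.
Proof.
rewrite /to_sph; case: pselect => h; first by exfalso; exact: (proj2_sig y) h.
case: y h => y hy h /=; congr Some; congr exist; exact: Prop_irrelevance.
Qed.


Lemma part2 (xi : bdry d) p eps dv dp di (Lb : R) :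
  0 < eps -> 1 <= Lb -> visual_metric p eps dv -> inversion_metric dv xi di ->
  is_metric dp ->
  (forall a b, dp a b / Lb <= di a b /\ di a b <= Lb * dp a b) ->
  forall (eta : compl_pt xi) (ds : option (compl_pt xi) -> option (compl_pt xi) -> R),
  sphericalization_metric dp eta ds -> exists L', bilipschitz dv ds L' (to_sph xi).
Proof.
move=> e0 L1 [mv hv] [mi hi] mp hb eta ds [ms hs].
have Lb0 : 0 < Lb by lra.
have dvnn : forall x y, 0 <= dv x y by case: mv.
have dvsym : forall x y, dv x y = dv y x by case: mv => _ [_ []].
have dvtri : forall x y z, dv x z <= dv x y + dv y z by case: mv => _ [_ [_]].
have dvxx : forall x, dv x x = 0 by move=> x; case: mv => _ [h _]; apply/h.
have dvpos : forall x y, x <> y -> 0 < dv x y.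
  move=> x y nxy; rewrite lt_neqAle dvnn andbT; apply/eqP => h0; apply: nxy.
  by case: mv => _ [h _]; apply/h.
have dv1 : forall x y, dv x y <= 1.
  move=> x y; have [->|nxy] := pselect (x = y); first by rewrite dvxx.
  have hne : dv x y <> 0 by have := dvpos _ _ nxy; lra.
  have [r [hr [_ ur]]] := fin_bound e0 hne (proj1 (hv x y)) (proj2 (hv x y)).
  have r0 : 0 <= r by rewrite -lee_fin -hr; apply: bg_nn.
  apply: le_trans ur _; rewrite expR_le1; nra.
have dpnn : forall x y, 0 <= dp x y by case: mp.
set c := dv (sval eta) xi.
have c0 : 0 < c by apply: dvpos; exact: (proj2_sig eta).
have c1 : c <= 1 by apply: dv1.
set Kp := 1 + Lb / c.
have hKp : Kp * c = c + Lb by rewrite /Kp mulrDl mul1r divfK //; rewrite gt_eqF.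
have claim : forall y : compl_pt xi,
    c * (dv (sval y) xi * (1 + dp y eta)) <= c + Lb /\
    c <= 8 * Lb * (dv (sval y) xi * (1 + dp y eta)).
  move=> y; set u := dv (sval y) xi; set q := dp y eta.
  have u0 : 0 < u by apply: dvpos; exact: (proj2_sig y).
  have u1 : u <= 1 by apply: dv1.
  have q0 : 0 <= q by apply: dpnn.
  have [dil diu] := hi y eta; rewrite -/u -/c in dil diu.
  set W := dv (sval y) (sval eta) in dil diu.
  have W1 : W <= 1 by apply: dv1.
  set t := di y eta in dil diu.
  have uc0 : 0 < u * c by apply: mulr_gt0.
  move: diu; rewrite ler_pdivlMr // => diu.
  move: dil; rewrite ler_pdivrMr; last by rewrite -mulrA mulr_gt0.
  move=> dil.
  have [hb1 hb2] := hb y eta; rewrite -/q -/t in hb1 hb2.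
  move: hb1; rewrite ler_pdivrMr // => hb1.
  have t0 : 0 <= t by case: mi => h _; apply: h.
  have tri : c <= W + u by rewrite /c /W (dvsym (sval y)); apply: dvtri.
  split.
    have : c * u * q <= c * u * (t * Lb) by apply: ler_wpM2l => //; nra.
    nra.
  have [uc | cu] := leP u (c / 2).
    have : c / 2 <= 4 * u * c * (Lb * q).
      have : 4 * u * c * t <= 4 * u * c * (Lb * q) by apply: ler_wpM2l => //; nra.
      nra.
    move=> h1.
    have : 1 <= 8 * Lb * (u * q).
      have h2 : c * 1 <= c * (8 * Lb * (u * q)) by nra.
      by rewrite -(ler_pM2l c0).
    nra.
  nra.
have Ic : c^-1 * c = 1 by rewrite mulVf // gt_eqF.
set L' := 4 * Kp + 8 * Lb * c^-1 + 16 * Lb * Kp ^+ 2 + 64 * Lb ^+ 3 * c^-1 ^+ 2 + 1.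
have Kp1 : 1 <= Kp by rewrite /Kp lerDl divr_ge0 //; lra.
have Icp : 0 < c^-1 by rewrite invr_gt0.
have t16 : 0 <= 16 * Lb * Kp ^+ 2 by rewrite !mulr_ge0 //; lra.
have t64 : 0 <= 64 * Lb ^+ 3 * c^-1 ^+ 2 by rewrite !mulr_ge0 ?exprn_ge0 //; lra.
have t8 : 0 <= 8 * Lb * c^-1 by rewrite !mulr_ge0 //; lra.
have L'1 : 1 <= L' by rewrite /L'; lra.
have L'0 : 0 < L' by lra.
have pt : forall y : compl_pt xi,
    dv (sval y) xi * (1 + dp y eta) <= Kp /\
    1 <= 8 * Lb * c^-1 * (dv (sval y) xi * (1 + dp y eta)).
  move=> y; have [h1 h2] := claim y; split.
    by rewrite -(ler_pM2l c0) (mulrC c Kp) hKp.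
  have : c^-1 * c <= c^-1 * (8 * Lb * (dv (sval y) xi * (1 + dp y eta))).
    by apply: ler_wpM2l; lra.
  rewrite Ic => h3; rewrite [X in _ <= X](_ : _ = c^-1 * (8 * Lb * (dv (sval y) xi * (1 + dp y eta)))) //; ring.
have sn : forall y : compl_pt xi,
    dv (sval y) xi / L' <= ds (Some y) None /\ ds (Some y) None <= L' * dv (sval y) xi.
  move=> y; have [hl hu] := hs (Some y) None; rewrite /= in hl hu.
  have [P1 P2] := pt y.
  set u := dv (sval y) xi in P1 P2 *.
  set U := 1 + dp y eta in hl hu P1 P2.
  set s := ds (Some y) None in hl hu *.
  have U1 : 1 <= U by rewrite /U lerDl.
  have U0 : 0 < U by lra.
  have UU : U^-1 * U = 1 by rewrite mulVf // gt_eqF.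
  have sU1 : 1 <= 4 * (s * U).
    have : U^-1 / 4 * U <= s * U by apply: ler_wpM2r; lra.
    rewrite mulrAC UU; lra.
  have sU2 : s * U <= 1.
    have : s * U <= U^-1 * U by apply: ler_wpM2r; lra.
    by rewrite UU.
  have u0 : 0 < u by apply: dvpos; exact: (proj2_sig y).
  have sp : 0 <= s by case: ms => h _; apply: h.
  split.
    rewrite ler_pdivrMr //.
    rewrite -(ler_pM2r U0).
    have : 4 * Kp <= L' by rewrite /L'; lra.
    move=> hL.
    have : L' * 1 <= L' * (4 * (s * U)) by apply: ler_wpM2l; lra.
    have e : s * L' * U = L' * (s * U) by ring.
    rewrite e; lra.
  rewrite -(ler_pM2r U0).
  have : 8 * Lb * c^-1 <= L' by rewrite /L'; lra.
  move=> hL.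
  have : L' * (u * U) >= 8 * Lb * c^-1 * (u * U) by apply: ler_wpM2r => //; apply: mulr_ge0; lra.
  have e : L' * u * U = L' * (u * U) by ring.
  rewrite e; lra.
have ss : forall y z : compl_pt xi,
    dv (sval y) (sval z) / L' <= ds (Some y) (Some z) /\
    ds (Some y) (Some z) <= L' * dv (sval y) (sval z).
  move=> y z; have [hl hu] := hs (Some y) (Some z); rewrite /= in hl hu.
  have [Py1 Py2] := pt y; have [Pz1 Pz2] := pt z.
  have [hil hiu] := hi y z.
  have [hb1 hb2] := hb y z.
  have u0 : 0 < dv (sval y) xi by apply: dvpos; exact: (proj2_sig y).
  have v0 : 0 < dv (sval z) xi by apply: dvpos; exact: (proj2_sig z).
  have Uy : 1 <= 1 + dp y eta by rewrite lerDl.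
  have Uz : 1 <= 1 + dp z eta by rewrite lerDl.
  set u := dv (sval y) xi in u0 Py1 Py2 hil hiu *.
  set v := dv (sval z) xi in v0 Pz1 Pz2 hil hiu *.
  set Uy' := 1 + dp y eta in Uy Py1 Py2 hl hu.
  set Uz' := 1 + dp z eta in Uz Pz1 Pz2 hl hu.
  set W := dv (sval y) (sval z) in hil hiu *.
  set t := di y z in hil hiu hb1 hb2.
  set q := dp y z in hl hu hb1 hb2.
  set s := ds (Some y) (Some z) in hl hu *.
  have V0 : 0 < Uy' * Uz' by apply: mulr_gt0; lra.
  have uv0 : 0 < u * v by apply: mulr_gt0.
  have sp : 0 <= s by case: ms => h _; apply: h.
  have q0 : 0 <= q by apply: dpnn.
  have t0 : 0 <= t by case: mi => h _; apply: h.
  have W0 : 0 <= W by apply: dvnn.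
  move: hl; rewrite ler_pdivrMr // ler_pdivrMr // => hl.
  move: hu; rewrite ler_pdivlMr // => hu.
  move: hil; rewrite -(mulrA 4) ler_pdivrMr; last by rewrite mulr_gt0.
  move=> hil.
  move: hiu; rewrite ler_pdivlMr // => hiu.
  move: hb1; rewrite ler_pdivrMr // => hb1.
  split.
    rewrite ler_pdivrMr //.
    have a2 : (u * v) * t <= (u * v) * (Lb * q) by apply: ler_wpM2l; lra.
    have a3 : Lb * ((u * v) * q) <= Lb * ((u * v) * (s * 4 * (Uy' * Uz'))).
      by apply: ler_wpM2l; [lra | apply: ler_wpM2l; lra].
    have Pp : 0 <= u * Uy' by apply: mulr_ge0; lra.
    have a5 : (u * Uy') * (v * Uz') <= Kp * Kp by apply: ler_pM => //; apply: mulr_ge0; lra.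
    have a6 : (16 * Lb * s) * ((u * Uy') * (v * Uz')) <= (16 * Lb * s) * (Kp * Kp).
      by apply: ler_wpM2l => //; rewrite !mulr_ge0 //; lra.
    have a7 : s * (16 * Lb * Kp ^+ 2) <= s * L' by apply: ler_wpM2l => //; rewrite /L'; lra.
    lra.
  have b4 : (s * (Uy' * Uz')) * (u * v) <= (t * Lb) * (u * v) by apply: ler_wpM2r; lra.
  have b5 : Lb * (t * (u * v)) <= Lb * W by apply: ler_wpM2l; lra.
  have b6 : 1 * 1 <= (8 * Lb * c^-1 * (u * Uy')) * (8 * Lb * c^-1 * (v * Uz')).
    by apply: ler_pM.
  have b7 : s * 1 <= s * ((8 * Lb * c^-1 * (u * Uy')) * (8 * Lb * c^-1 * (v * Uz'))).
    by apply: ler_wpM2l => //; lra.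
  have k0 : 0 <= 64 * Lb ^+ 2 * c^-1 ^+ 2 by rewrite !mulr_ge0 ?exprn_ge0 //; lra.
  have b9 : (64 * Lb ^+ 2 * c^-1 ^+ 2) * ((s * (Uy' * Uz')) * (u * v)) <=
            (64 * Lb ^+ 2 * c^-1 ^+ 2) * (Lb * W).
    by apply: ler_wpM2l => //; lra.
  have b10 : (64 * Lb ^+ 3 * c^-1 ^+ 2) * W <= L' * W by apply: ler_wpM2r => //; rewrite /L'; lra.
  lra.
exists L'; split => // a b.
have [-> | ha] := pselect (a = xi); have [-> | hb'] := pselect (b = xi).
- rewrite to_sph_xi dvxx ?mul0r ?mulr0.
  have [_ h] := hs None None; rewrite /= in h.
  have h0 : 0 <= ds None None by case: ms => hh _; apply: hh.
  lra.
- pose z := exist (fun x => x <> xi) b hb'.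
  change b with (sval z); rewrite to_sph_xi to_sph_y dvsym.
  have -> : ds None (Some z) = ds (Some z) None by case: ms => _ [_ []].
  exact: sn.
- pose y := exist (fun x => x <> xi) a ha.
  change a with (sval y); rewrite to_sph_xi to_sph_y.
  exact: sn.
- pose y := exist (fun x => x <> xi) a ha.
  pose z := exist (fun x => x <> xi) b hb'.
  change a with (sval y); change b with (sval z); rewrite !to_sph_y.
  exact: ss.
Qed.
End Main.

(* eps0, eps1 : the constants (depending only on delta) below which the
   visual / parabolic visual metrics exist *)
Theorem proposition5p4 (R : realType) (delta eps0 eps1 : R) :
  0 <= delta -> 0 < eps0 -> 0 < eps1 ->
  exists L : R, 1 <= L /\
  forall (X : Type) (d : X -> X -> R),
    proper_geodesic_hyperbolic d delta ->
  forall (xi : bdry d) (p : X) (eps : R),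
    0 < eps -> eps <= Num.min eps0 eps1 ->
  forall (dv : bdry d -> bdry d -> R)
         (dp : compl_pt xi -> compl_pt xi -> R)
         (di : compl_pt xi -> compl_pt xi -> R),
    visual_metric p eps dv ->
    parabolic_visual_metric xi p eps dp ->
    inversion_metric dv xi di ->
    (* (1) *)
    bilipschitz dp di L id /\
    (* (2) *)
    (~ isolated_pt dv xi ->
     forall (eta : compl_pt xi) (ds : option (compl_pt xi) -> option (compl_pt xi) -> R),
       sphericalization_metric dp eta ds ->
       exists L' : R, bilipschitz dv ds L' (to_sph xi)).
Proof.
move=> d0 e0 e1; exists (8 * expR (eps0 * (16 * delta + 6))).
have L1 : 1 <= 8 * expR (eps0 * (16 * delta + 6)).
  have := expR_ge1Dx (eps0 * (16 * delta + 6)).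
  have : 0 <= eps0 * (16 * delta + 6) by apply: mulr_ge0; lra.
  lra.
split => // X d [Hm [_ [_ Hh]]] xi p eps ep epm dv dp di hv hp hi.
have ee0 : eps <= eps0 by move: epm; rewrite le_min => /andP[].
have hb := pair_bound Hm Hh ep ee0 hv hp hi.
split; first by split.
move=> _ eta ds hs.
exact: (part2 Hm ep L1 hv hi (proj1 hp) hb hs).
Qed.
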